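(* Let $T$ be a decomposition tree of a distance-hereditary graph $G$ and let $v$ be an internal node of $T$. Then $|\hat\gamma_k(v)-\hat\gamma_{k+1}(v)|=1$ for every integer $0\le k<|\hat{TS}(v)|$.
   Context: All graphs are finite, simple, undirected. For a graph $H$ and $S\subseteq V(H)$, $N_H[S]$ is $S$ together with all vertices adjacent to a vertex of $S$, and $H[S]$ is the induced subgraph. Graphs carry a ''twin set'': a single-vertex graph on $x$ has twin set $\{x\}$. For vertex-disjoint graphs $G_l,G_r$ with twin sets $TS(G_l),TS(G_r)$: the true twin operation $G_l\otimes G_r$ has vertex set $V(G_l)\cup V(G_r)$, edge set $E(G_l)\cup E(G_r)\cup\{uw: u\in TS(G_l), w\in TS(G_r)\}$ and twin set $TS(G_l)\cup TS(G_r)$; the false twin operation $G_l\odot G_r$ has vertex set $V(G_l)\cup V(G_r)$, edge set $E(G_l)\cup E(G_r)$, twin set $TS(G_l)\cup TS(G_r)$; the attachment operation $G_l\oplus G_r$ has the same vertex and edge sets as $G_l\otimes G_r$ and twin set $TS(G_l)$. A decomposition tree $T$ of $G$ is a rooted binary tree whose leaves are in bijection with $V(G)$, each internal node having a left and a right child and a label in $\{\otimes,\odot,\oplus\}$; for each node $v$ define $\hat G(v)$ and $\hat{TS}(v)$ recursively: for a leaf $x$, the single-vertex graph on $x$ with twin set $\{x\}$; for an internal node $v$ with label $\circ$ and children $v_l,v_r$, $\hat G(v)=\hat G(v_l)\circ\hat G(v_r)$ with the corresponding twin set; one requires $\hat G(\text{root})=G$. Then $\hat G(v)$ is the subgraph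 of $G$ induced by the set $\hat V(v)$ of leaves below $v$. For a node $v$ and $0\le k\le|\hat{TS}(v)|$, call $S\subseteq\hat V(v)$ $k$-feasible if $\hat V(v)\setminus\hat{TS}(v)\subseteq N_{\hat G(v)}[S]$ and there is $X\subseteq S\cap\hat{TS}(v)$ with $|X|=k$ such that $\hat G(v)[S\setminus X]$ has a perfect matching. $\hat\gamma_k(v)$ is the minimum size of a $k$-feasible set. *)

(* Defs.v *)
From mathcomp Require Import all_boot all_order.
Set Implicit Arguments. Unset Strict Implicit. Unset Printing Implicit Defensive.

Section DH.
Variable V : finType.

Definition simple_graph (e : rel V) : Prop :=
  (forall x y, e x y = e y x) /\ (forall x, e x x = false).

(* reach e S n x y : there is a walk of length <= n from x to y in e whose
   vertices after x lie in S (for x in S: dist_{G[S]}(x,y) <= n). *)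
Fixpoint reach (e : rel V) (S : {set V}) (n : nat) (x y : V) : bool :=
  match n with
  | 0 => x == y
  | n'.+1 => reach e S n' x y || [exists z in S, reach e S n' x z && e z y && (y \in S)]
  end.

Definition induced_connected (e : rel V) (S : {set V}) : Prop :=
  forall x y, x \in S -> y \in S -> exists n, reach e S n x y.

(* distance-hereditary: in every connected induced subgraph, distances equal
   those in G (d_{G[S]} >= d_G always holds, so we require <=). *)
Definition distance_hereditary (e : rel V) : Prop :=
  forall S : {set V}, induced_connected e S ->
    forall x y, x \in S -> y \in S ->
      forall n, reach e setT n x y -> reach e S n x y.

Inductive dop := TrueTwin | FalseTwin | Attach.

Definition dop_eqb (a b : dop) : bool :=
  match a, b with
  | TrueTwin, TrueTwin | FalseTwin, FalseTwin | Attach, Attach => true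
  | _, _ => false
  end.

Inductive dtree :=
  | Leaf of V
  | Node of dop & dtree & dtree.

Fixpoint leaves (t : dtree) : seq V :=
  match t with Leaf x => [:: x] | Node _ l r => leaves l ++ leaves r end.

Definition tverts (t : dtree) : {set V} := [set x in leaves t].

(* \hat TS(v) *)
Fixpoint tTS (t : dtree) : {set V} :=
  match t with
  | Leaf x => [set x]
  | Node TrueTwin l r => tTS l :|: tTS r
  | Node FalseTwin l r => tTS l :|: tTS r
  | Node Attach l _ => tTS l
  end.

(* edge relation of \hat G(v) *)
Fixpoint tedge (t : dtree) : rel V :=
  match t with
  | Leaf _ => fun _ _ => false
  | Node o l r => fun u w =>
      [|| tedge l u w, tedge r u w |
          ~~ dop_eqb o FalseTwin &&
          (((u \in tTS l) && (w \in tTS r)) || ((w \in tTS l) && (u \in tTS r)))]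
  end.

Definition decomposition_tree (e : rel V) (T : dtree) : Prop :=
  uniq (leaves T) /\ (forall x, x \in leaves T) /\ (forall u w, e u w = tedge T u w).

(* v is a node of T (a subtree rooted at a node) *)
Fixpoint is_node (v T : dtree) : Prop :=
  v = T \/ match T with Leaf _ => False | Node _ l r => is_node v l \/ is_node v r end.

Definition internal (v : dtree) : bool := if v is Node _ _ _ then true else false.

Definition cnbh (t : dtree) (S : {set V}) : {set V} :=
  [set x in tverts t | (x \in S) || [exists y in S, tedge t y x]].

Definition has_perfect_matching (e : rel V) (W : {set V}) : Prop :=
  exists M : {set {set V}}, partition M W /\
    forall m, m \in M -> exists u w, [/\ m = [set u; w], u != w & e u w].

Definition k_feasible (t : dtree) (k : nat) (S : {set V}) : Prop :=
  S \subset tverts t /\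
  (tverts t :\: tTS t) \subset cnbh t S /\
  exists X : {set V}, [/\ X \subset S :&: tTS t, #|X| = k &
                          has_perfect_matching (tedge t) (S :\: X)].

(* m = \hat\gamma_k(v): the minimum size of a k-feasible set *)
Definition is_gamma (t : dtree) (k m : nat) : Prop :=
  (exists S, k_feasible t k S /\ #|S| = m) /\
  (forall S, k_feasible t k S -> m <= #|S|).

End DH.

(* Main.v *)
Require Import Defs.
From mathcomp Require Import all_boot all_order.
From mathcomp Require Import zify.
From Stdlib Require Import Classical.
Set Implicit Arguments. Unset Strict Implicit. Unset Printing Implicit Defensive.

Section Abs.
Variable V : finType.
Variable ed : rel V.
Variables A B : {set V}.
Hypothesis edS : forall x y, ed x y = ed y x.
Hypothesis edI : forall x, ed x x = false.
Hypothesis edA : forall x y, ed x y -> x \in A.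
Hypothesis BA : B \subset A.
Hypothesis nbr : forall y, y \in A -> y \notin B -> exists z, ed z y.

Definition pm (W : {set V}) := has_perfect_matching ed W.
Definition feas (k : nat) (S : {set V}) := S \subset A /\
  (A :\: B) \subset [set x in A | (x \in S) || [exists y in S, ed y x]] /\
  exists X : {set V}, [/\ X \subset S :&: B, #|X| = k & pm (S :\: X)].

Lemma pm0 : pm set0.
Proof. exists set0; split; first by rewrite partition_set0. by move=> m; rewrite inE. Qed.

Lemma pm_add W x y : pm W -> x \notin W -> y \notin W -> x != y -> ed x y ->
  pm ([set x; y] :|: W).
Proof.
move=> [M [pM bM]] xW yW xy exy.
exists ([set x; y] |: M); split.
  apply: partitionU1 => //.
    by apply/set0Pn; exists x; rewrite !inE eqxx.
  apply/pred0P => z /=; rewrite !inE.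
  by case: (eqVneq z x) => [->|_]; [rewrite (negbTE xW)|case: (eqVneq z y) => [->|_]; rewrite ?(negbTE yW)].
move=> m; rewrite !inE => /orP [/eqP->|/bM //]; by exists x, y.
Qed.

Lemma pm_partner W t : pm W -> t \in W ->
  exists u, [/\ u \in W, u != t, ed t u & pm (W :\: [set t; u])].
Proof.
move=> [M [pM bM]] tW.
have cM : cover M = W by apply/eqP; case/and3P: pM.
have pb : pblock M t \in M by apply: pblock_mem; rewrite cM.
have tp : t \in pblock M t by rewrite mem_pblock cM.
have pMD := partitionD1 pM pb.
have hD : pm (W :\: pblock M t).
  exists (M :\ pblock M t); split => // m; rewrite !inE => /andP [_ /bM] //.
have [a [b [ep ab eab]]] := bM _ pb.
have aW : a \in W by apply: (subsetP (partitionS pM pb)); rewrite ep !inE eqxx.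
have bW : b \in W by apply: (subsetP (partitionS pM pb)); rewrite ep !inE eqxx orbT.
move: tp; rewrite ep !inE => /orP [/eqP ta|/eqP tb].
  exists b; split => //; first by rewrite ta eq_sym.
    by rewrite ta.
  by move: hD; rewrite ep ta.
exists a; split => //; first by rewrite tb.
  by rewrite tb edS.
by move: hD; rewrite ep tb setUC.
Qed.

Lemma pm_even W : pm W -> ~~ odd #|W|.
Proof.
move=> [M [pM bM]].
rewrite (card_partition pM).
rewrite (eq_bigr (fun _ => 2)); last first.
  by move=> m /bM [u [w [-> uw _]]]; rewrite cards2 uw.
by rewrite sum_nat_const oddM /= andbF.
Qed.

Lemma feas_odd k S : feas k S -> odd #|S| = odd k.
Proof.
move=> [_ [_ [X [XS cX pW]]]].
have XS' : X \subset S by apply: subset_trans XS (subsetIl _ _).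
have := cardsID X S; rewrite (setIidPr XS') cX => <-.
by rewrite oddD (negbTE (pm_even pW)) addbF.
Qed.

Lemma edA2 x y : ed x y -> y \in A.
Proof. by rewrite edS; apply: edA. Qed.

Lemma dom_mono (S S' : {set V}) : S \subset S' ->
  (A :\: B) \subset [set x in A | (x \in S) || [exists y in S, ed y x]] ->
  (A :\: B) \subset [set x in A | (x \in S') || [exists y in S', ed y x]].
Proof.
move=> sS h; apply/subsetP => z /(subsetP h); rewrite !inE => /andP [-> /orP [zS|/existsP [y /andP [yS eyz]]]] /=.
  by rewrite (subsetP sS).
apply/orP; right; apply/existsP; exists y; by rewrite (subsetP sS).
Qed.

Lemma up k S : feas k S -> k < #|B| -> exists S', feas k.+1 S' /\ #|S'| <= #|S|.+1.
Proof.
move=> [SA [dom [X [XSB cX pW]]]] kB.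
have XS : X \subset S by apply: subset_trans XSB (subsetIl _ _).
have XB : X \subset B by apply: subset_trans XSB (subsetIr _ _).
case: (boolP (B \subset S)) => BS; last first.
  have [t tB tS] := subsetPn BS.
  have tX : t \notin X by apply/negP => /(subsetP XS); apply/negP.
  exists (t |: S); split; last by rewrite cardsU1 tS.
  split; first by apply/subsetP => z; rewrite !inE => /orP [/eqP->|/(subsetP SA)//]; apply: (subsetP BA).
  split; first by apply: dom_mono dom; apply: subsetUr.
  exists (t |: X); split.
  - apply/subsetP => z; rewrite !inE => /orP [/eqP->|zX]; first by rewrite eqxx tB.
    by have := subsetP XSB z zX; rewrite !inE => /andP [-> ->]; rewrite orbT.
  - by rewrite cardsU1 tX cX.
  - suff -> : (t |: S) :\: (t |: X) = S :\: X by [].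
    apply/setP => z; rewrite !inE; case: (eqVneq z t) => [->|] //=.
    by rewrite (negbTE tS) andbF.
have [t tB tX] : exists2 t, t \in B & t \notin X.
  apply/subsetPn; apply/negP => BX.
  by have := subset_leq_card BX; rewrite cX leqNgt kB.
have tS : t \in S by apply: (subsetP BS).
have tW : t \in S :\: X by rewrite inE tX tS.
have [u [uW ut etu pW']] := pm_partner pW tW.
have uS : u \in S by move: uW; rewrite inE => /andP [].
have uX : u \notin X by move: uW; rewrite inE => /andP [].
case: (boolP [exists w, (w \notin S) && ed u w]) => [/existsP [w /andP [wS euw]]|nw].
  have wA : w \in A by apply: edA2 euw.
  exists (w |: S); split; last by rewrite cardsU1 wS.
  split; first by apply/subsetP => z; rewrite !inE => /orP [/eqP->|/(subsetP SA)//].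
  split; first by apply: dom_mono dom; apply: subsetUr.
  exists (t |: X); split.
  - apply/subsetP => z; rewrite !inE => /orP [/eqP->|zX]; first by rewrite tB tS !orbT.
    by have := subsetP XSB z zX; rewrite !inE => /andP [-> ->]; rewrite orbT.
  - by rewrite cardsU1 tX cX.
  - have -> : (w |: S) :\: (t |: X) = [set u; w] :|: ((S :\: X) :\: [set t; u]).
      apply/setP => z; rewrite !inE.
      case: (eqVneq z u) => [->|zu]; first by rewrite (negbTE ut) uS uX orbT.
      case: (eqVneq z w) => [->|zw] /=.
        have wt : w != t by apply/eqP => wt; move: wS; rewrite wt tS.
        rewrite (negbTE wt) andbT /=; apply/negP => /(subsetP XS) h; by rewrite h in wS.
      by rewrite orbF; case: (z == t); case: (z \in X).
    apply: pm_add => //.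
    + by rewrite !inE eqxx orbT.
    + by rewrite !inE (negbTE wS) !andbF.
    + by apply/eqP => uw; move: wS; rewrite -uw uS.
have nw' : forall w, ed u w -> w \in S.
  move=> w euw; apply/negPn/negP => wS; move/existsP: nw; apply; exists w; by rewrite wS.
exists (S :\ u); split; last by rewrite ltnW // ltnS subset_leq_card // subsetDl.
split; first by apply: subset_trans SA; apply: subsetDl.
split.
  apply/subsetP => z zAB; have := subsetP dom z zAB; rewrite !inE => /andP [-> /orP [zS|/existsP [y /andP [yS eyz]]]] /=.
    case: (eqVneq z u) => [->|zu] /=; last by rewrite zS.
    apply/existsP; exists t; by rewrite !inE eq_sym ut tS etu.
  case: (eqVneq y u) => [yu|yu].
    have zS := nw' z (etrans (congr1 (ed^~ z) (esym yu)) eyz).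
    have zu : z != u by apply/eqP => zu; move: eyz; rewrite yu zu edI.
    by rewrite zu zS.
  apply/orP; right; apply/existsP; exists y; by rewrite !inE yu yS eyz.
exists (t |: X); split.
- apply/subsetP => z; rewrite !inE => /orP [/eqP->|zX]; first by rewrite eq_sym ut tB tS.
  have := subsetP XSB z zX; rewrite !inE => /andP [zS zB]; rewrite zS zB !andbT.
  by apply/eqP => zu; move: uX; rewrite -zu zX.
- by rewrite cardsU1 tX cX.
- have -> : (S :\ u) :\: (t |: X) = (S :\: X) :\: [set t; u].
    apply/setP => z; rewrite !inE.
    by case: (z == t); case: (z == u); case: (z \in X); case: (z \in S).
  exact: pW'.
Qed.

Lemma down k S : feas k.+1 S -> exists S', feas k S' /\ #|S'| <= #|S|.+1.
Proof.
move=> [SA [dom [X [XSB cX pW]]]].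
have [x xX] : exists x, x \in X by apply/set0Pn; rewrite -card_gt0 cX.
have := subsetP XSB x xX; rewrite inE => /andP [xS xB].
have xW : x \notin S :\: X by rewrite inE xX.
have cX' : #|X :\ x| = k by move: cX; rewrite (cardsD1 x X) xX => -[].
have X'S : X :\ x \subset S :&: B by apply: subset_trans XSB; apply: subsetDl.
case: (boolP [exists w, (w \notin S) && ed x w]) => [/existsP [w /andP [wS exw]]|nw].
  have wA : w \in A by apply: edA2 exw.
  exists (w |: S); split; last by rewrite cardsU1 wS.
  split; first by apply/subsetP => z; rewrite !inE => /orP [/eqP->|/(subsetP SA)//].
  split; first by apply: dom_mono dom; apply: subsetUr.
  exists (X :\ x); split => //.
  - by apply: (subset_trans X'S); apply: setSI; apply: subsetUr.
  - have -> : (w |: S) :\: (X :\ x) = [set x; w] :|: (S :\: X).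
      apply/setP => z; rewrite !inE.
      case: (eqVneq z x) => [->|zx] /=; first by rewrite xS orbT.
      case: (eqVneq z w) => [->|zw] /=; last by [].
      rewrite andbT; apply/negP => /(subsetP (subset_trans XSB (subsetIl _ _))); by apply/negP.
    apply: pm_add => //.
    + by rewrite !inE (negbTE wS) andbF.
    + by apply/eqP => xw; move: wS; rewrite -xw xS.
have nw' : forall w, ed x w -> w \in S.
  move=> w exw; apply/negPn/negP => wS; move/existsP: nw; apply; exists w; by rewrite wS.
exists (S :\ x); split; last by rewrite ltnW // ltnS subset_leq_card // subsetDl.
split; first by apply: subset_trans SA; apply: subsetDl.
split.
  apply/subsetP => z zAB; have := subsetP dom z zAB; rewrite !inE => /andP [-> /orP [zS|/existsP [y /andP [yS eyz]]]] /=.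
    have zx : z != x by apply/eqP => zx; move: zAB; rewrite zx !inE xB.
    by rewrite zx zS.
  case: (eqVneq y x) => [yx|yx].
    have zS := nw' z (etrans (congr1 (ed^~ z) (esym yx)) eyz).
    have zx : z != x by apply/eqP => zx; move: eyz; rewrite yx zx edI.
    by rewrite zx zS.
  apply/orP; right; apply/existsP; exists y; by rewrite !inE yx yS eyz.
exists (X :\ x); split => //.
- apply/subsetP => z; rewrite !inE => /andP [zx zX].
  have := subsetP XSB z zX; rewrite !inE => /andP [-> ->]; by rewrite zx.
- have -> : (S :\ x) :\: (X :\ x) = S :\: X.
    apply/setP => z; rewrite !inE; case: (eqVneq z x) => [->|] //=.
    by rewrite xX.
  exact: pW.
Qed.

Lemma maxpm n (W : {set V}) : #|A :\: W| <= n -> W \subset A -> pm W ->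
  exists W' : {set V}, [/\ W' \subset A, pm W' &
    forall a b, a \in A :\: W' -> b \in A :\: W' -> ~~ ed a b].
Proof.
elim: n W => [|n IH] W cW WA pW.
  exists W; split => // a b aW; move: cW; rewrite leqn0 cards_eq0 => /eqP h.
  by move: aW; rewrite h inE.
case: (boolP [exists a, exists b, [&& a \in A :\: W, b \in A :\: W & ed a b]]) => [|h].
  move=> /existsP [a /existsP [b /and3P [aW bW eab]]].
  have ab : a != b by apply/eqP => ab; move: eab; rewrite ab edI.
  move: (aW) (bW); rewrite !inE => /andP [aW' aA] /andP [bW' bA].
  apply: (IH ([set a; b] :|: W)).
  - rewrite -ltnS; apply: leq_trans cW; apply: proper_card; apply/properP; split.
      by apply: setDS; apply: subsetUr.
    by exists a => //; rewrite !inE eqxx.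
  - by apply/subsetP => z; rewrite !inE => /orP [/orP [/eqP->|/eqP->]|/(subsetP WA)].
  - exact: pm_add.
exists W; split => // a b aW bW; apply/negP => eab; move/existsP: h; apply.
by exists a; apply/existsP; exists b; rewrite aW bW eab.
Qed.

Lemma exists_feas : exists k0 S, k0 <= #|B| /\ feas k0 S.
Proof.
have [W [WA pW ind]] := maxpm (leqnn _) (sub0set A) pm0.
exists #|B :\: W|, (W :|: (B :\: W)); split; first by apply: subset_leq_card; apply: subsetDl.
split; first by apply/subsetP => z; rewrite !inE => /orP [/(subsetP WA)//|/andP [_ /(subsetP BA)]].
split.
  apply/subsetP => y; rewrite !inE => /andP [yB yA]; rewrite yA /=.
  case: (boolP (y \in W)) => // yW /=.
  have [z ezy] := nbr yA yB.
  apply/orP; right; apply/existsP; exists z; rewrite ezy andbT !inE.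
  case: (boolP (z \in W)) => // zW.
  have := ind z y; rewrite !inE zW yW yA (edA ezy) ezy => /(_ isT isT) //.
exists (B :\: W); split => //.
  by apply/subsetP => z; rewrite !inE => /andP [-> ->]; rewrite orbT.
suff -> : (W :|: (B :\: W)) :\: (B :\: W) = W by [].
apply/setP => z; rewrite !inE; by case: (z \in W); case: (z \in B).
Qed.

Lemma all_feas k : k <= #|B| -> exists S, feas k S.
Proof.
have [k0 [S0 [k0B f0]]] := exists_feas.
have upd : forall d, k0 + d <= #|B| -> exists S, feas (k0 + d) S.
  elim=> [|d IH] h; first by rewrite addn0; exists S0.
  have h' : k0 + d < #|B| by rewrite -addnS.
  have [S fS] := IH (ltnW h').
  have [S' [fS' _]] := up fS h'.
  by exists S'; rewrite addnS.
have dnd : forall d, d <= k0 -> exists S, feas (k0 - d) S.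
  elim=> [|d IH] h; first by rewrite subn0; exists S0.
  have [S fS] := IH (ltnW h).
  have e : k0 - d = (k0 - d.+1).+1 by lia.
  rewrite e in fS; have [S' [fS' _]] := down fS.
  by exists S'.
move=> kB; case: (leqP k0 k) => hk.
  have -> : k = k0 + (k - k0) by lia.
  apply: upd; lia.
have -> : k = k0 - (k0 - k) by lia.
apply: dnd; lia.
Qed.

Lemma minP (P : {set V} -> Prop) : (exists S, P S) ->
  exists S : {set V}, P S /\ forall S' : {set V}, P S' -> #|S| <= #|S'|.
Proof.
move=> [S PS].
suff : forall n (S : {set V}), #|S| <= n -> P S -> exists S : {set V}, P S /\ forall S', P S' -> #|S| <= #|S'|.
  by move/(_ _ S (leqnn _) PS).
elim=> [|n IH] S1 c1 P1.
  by exists S1; split => // S' _; move: c1; rewrite leqn0 => /eqP->.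
case: (classic (forall S', P S' -> #|S1| <= #|S'|)) => h; first by exists S1.
have [S' h'] := not_all_ex_not _ _ h.
have [PS' nle] := imply_to_and _ _ h'.
apply: (IH S') => //.
by move/negP: nle; rewrite -ltnNge => lt; rewrite -ltnS; apply: leq_trans lt c1.
Qed.

Definition gam k m := (exists S, feas k S /\ #|S| = m) /\ (forall S, feas k S -> m <= #|S|).

Lemma main_abs k : k < #|B| ->
  exists a b : nat, [/\ gam k a, gam k.+1 b & (a = b.+1 \/ b = a.+1)].
Proof.
move=> kB.
have [Sa [fa ma]] := minP (all_feas (ltnW kB)).
have [Sb [fb mb]] := minP (all_feas kB).
exists #|Sa|, #|Sb|.
have [S1 [f1 c1]] := up fa kB.
have [S2 [f2 c2]] := down fb.
have le1 := leq_trans (mb _ f1) c1.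
have le2 := leq_trans (ma _ f2) c2.
have oa := feas_odd fa; have ob := feas_odd fb.
have ne : #|Sa| <> #|Sb|.
  by move=> e; move: ob; rewrite -e oa /=; case: (odd k).
split.
- by split; [exists Sa|].
- by split; [exists Sb|].
- lia.
Qed.

End Abs.

Section Tree.
Variable V : finType.

Lemma tverts_node o (l r : dtree V) : tverts (Node o l r) = tverts l :|: tverts r.
Proof. by apply/setP => x; rewrite !inE /= mem_cat. Qed.

Lemma TS_sub (t : dtree V) : tTS t \subset tverts t.
Proof.
elim: t => [x|o l IHl r IHr]; first by apply/subsetP => y; rewrite !inE.
rewrite tverts_node; apply/subsetP => y.
case: o => /=; rewrite !in_setU.
- by case/orP => [/(subsetP IHl)|/(subsetP IHr)] ->; rewrite ?orbT.
- by case/orP => [/(subsetP IHl)|/(subsetP IHr)] ->; rewrite ?orbT.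
- by move/(subsetP IHl) ->.
Qed.

Lemma TS_l o (l r : dtree V) y : y \in tTS l -> y \in tTS (Node o l r).
Proof. by case: o => /=; rewrite ?in_setU => ->. Qed.

Lemma TS_ne (t : dtree V) : exists x, x \in tTS t.
Proof.
elim: t => [x|o l [x hx] r _]; first by exists x; rewrite inE.
by exists x; apply: TS_l.
Qed.

Lemma edge_in (t : dtree V) a b : tedge t a b -> a \in tverts t /\ b \in tverts t.
Proof.
elim: t a b => [//|o l IHl r IHr] a b /=.
rewrite tverts_node !in_setU.
case/or3P => [/IHl [-> ->] //|/IHr [-> ->]|/andP [_ /orP [/andP [a1 b1]|/andP [b1 a1]]]];
  rewrite ?orbT //.
- by rewrite (subsetP (TS_sub l) _ a1) (subsetP (TS_sub r) _ b1) orbT.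
- by rewrite (subsetP (TS_sub l) _ b1) (subsetP (TS_sub r) _ a1) orbT.
Qed.

Lemma edge_sym (t : dtree V) a b : tedge t a b = tedge t b a.
Proof.
elim: t a b => [//|o l IHl r IHr] a b /=.
by rewrite IHl IHr [(b \in tTS l) && _ || _]orbC.
Qed.

Lemma edge_nbr (t : dtree V) y : y \in tverts t -> y \notin tTS t -> exists z, tedge t z y.
Proof.
elim: t y => [x|o l IHl r IHr] y; first by rewrite !inE => ->.
rewrite tverts_node in_setU => /orP [yl|yr] yT.
  have yl' : y \notin tTS l by apply/negP => /(TS_l o r); apply/negP.
  by have [z hz] := IHl _ yl yl'; exists z; rewrite /= hz.
case: (boolP (y \in tTS r)) => yr'; last first.
  by have [z hz] := IHr _ yr yr'; exists z; rewrite /= hz orbT.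
have [z hz] := TS_ne l.
move: yT; case: o => /=; rewrite ?in_setU ?yr' ?orbT // => _.
by exists z; rewrite /= hz !orbT.
Qed.

Lemma edge_node (v T : dtree V) a b : is_node v T -> tedge v a b -> tedge T a b.
Proof.
elim: T => [x|o l IHl r IHr] /=; first by case=> [->|[]].
case=> [->//|[h|h]] e; first by rewrite IHl.
by rewrite IHr ?orbT.
Qed.

End Tree.

Theorem lemma4 (V : finType) (e : rel V) (T v : dtree V) (k : nat) :
  simple_graph e -> distance_hereditary e -> decomposition_tree e T ->
  is_node v T -> internal v -> k < #|tTS v| ->
  exists a b : nat, [/\ is_gamma v k a, is_gamma v k.+1 b & (a = b.+1 \/ b = a.+1)].
Proof.
move=> [eS eI] _ [_ [_ eT]] nd _ hk.
have edI : forall x, tedge v x x = false.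
  by move=> x; apply/negP => /(edge_node nd); rewrite -eT eI.
have := @main_abs V (tedge v) (tverts v) (tTS v) (@edge_sym V v) edI
  (fun x y h => (edge_in h).1) (TS_sub v) (@edge_nbr V v) k hk.
by [].
Qed.
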